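(* Let $\mathbf{E}\in\mathbb{K}^{m\times\sigma}$, $\mathbf{J}\in\mathbb{K}^{\sigma\times\sigma}$, $\mathbf{s}\in\mathbb{Z}^m$, and let $\boldsymbol{\delta}=(\delta_1,\dots,\delta_m)$ be the $\mathbf{s}$-minimal degree of $(\mathbf{E},\mathbf{J})$. Let $\delta=\lceil\sigma/m\rceil\ge1$; for $1\le i\le m$ write $\delta_i=(\alpha_i-1)\delta+\beta_i$ with $\alpha_i\ge1$ and $0\le\beta_i<\delta$, and let $\bar m=\alpha_1+\cdots+\alpha_m$. Define $\bar{\boldsymbol{\delta}}=(\underbrace{\delta,\dots,\delta,\beta_1}_{\alpha_1},\dots,\underbrace{\delta,\dots,\delta,\beta_m}_{\alpha_m})\in\mathbb{N}^{\bar m}$ and the block-diagonal matrix $\mathcal{E}\in\mathbb{K}[X]^{\bar m\times m}$ whose $i$-th diagonal block is the column $[1,X^{\delta},X^{2\delta},\dots,X^{(\alpha_i-1)\delta}]^{\mathsf T}$. Let $\mathbf{d}=-\bar{\boldsymbol{\delta}}\in\mathbb{Z}^{\bar m}$ and let $\mathbf{R}\in\mathbb{K}[X]^{\bar m\times\bar m}$ be a $\mathbf{d}$-minimal interpolation basis for $(\mathcal{E}\cdot\mathbf{E},\mathbf{J})$. Then the $\mathbf{s}$-Popov interpolation basis for $(\mathbf{E},\mathbf{J})$ is the submatrix of $\mathrm{lm}_{\mathbf{d}}(\mathbf{R})^{-1}\mathbf{R}\,\mathcal{E}$ formed by its rows at indices $\alpha_1+\cdots+\alpha_i$ for $1\le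 i\le m$.
   Context: For $p\in\mathbb{K}[X]$ and $\mathbf{e}\in\mathbb{K}^{1\times\sigma}$, $p\cdot\mathbf{e}=\mathbf{e}\,p(\mathbf{J})$; for a matrix $\mathbf{A}=[a_{ij}]\in\mathbb{K}[X]^{k\times m}$, $\mathbf{A}\cdot\mathbf{E}\in\mathbb{K}^{k\times\sigma}$ has $i$-th row $\sum_j a_{ij}\cdot\mathbf{e}_j$, $\mathbf{e}_j$ the rows of $\mathbf{E}$. An interpolant for $(\mathbf{E},\mathbf{J})$ is a row $\mathbf{p}$ with $\mathbf{p}\cdot\mathbf{E}=0$; an interpolation basis is a square matrix whose rows form a basis of the free module of interpolants. For a shift $\mathbf{s}$ (integer entries, possibly negative), the $\mathbf{s}$-degree of a nonzero row $[p_j]$ is $\max_j(\deg p_j+s_j)$; the $\mathbf{s}$-leading matrix $\mathrm{lm}_{\mathbf{s}}(\mathbf{P})$ of a full-rank $\mathbf{P}$ with row $\mathbf{s}$-degrees $d_i$ has $(i,j)$ entry the coefficient of degree $d_i-s_j$ of $p_{ij}$; $\mathbf{P}$ is $\mathbf{s}$-reduced if $\mathrm{lm}_{\mathbf{s}}(\mathbf{P})$ has full row rank; an $\mathbf{s}$-minimal interpolation basis is an $\mathbf{s}$-reduced interpolation basis. The $\mathbf{s}$-pivot index of a row is the largest $j$ attaining its $\mathbf{s}$-degree, $p_j$ its pivot entry. A nonsingular matrix is in $\mathbf{s}$-Popov form if its $\mathbf{s}$-pivot entries are monic and on the diagonal and in each column the nonpivot entries have degree less than the pivot entry. The $\mathbf{s}$-Popov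 interpolation basis is the unique interpolation basis in $\mathbf{s}$-Popov form; the $\mathbf{s}$-minimal degree is the tuple of degrees of its diagonal entries. *)

(* Defs.v *)
From HB Require Import structures.
From mathcomp Require Import all_boot all_order all_algebra.
Set Implicit Arguments. Unset Strict Implicit. Unset Printing Implicit Defensive.
Import Order.TTheory GRing.Theory Num.Theory.
Local Open Scope ring_scope.

Section Interp.
Variable K : fieldType.

Definition peval (sigma : nat) (p : {poly K}) (J : 'M[K]_sigma) : 'M[K]_sigma :=
  \sum_(l < size p) p`_l *: J ^+ l.

(* A . E : the i-th row is sum_j a_ij . e_j, where p . e = e p(J) *)
Definition pact (k m sigma : nat) (A : 'M[{poly K}]_(k, m)) (E : 'M[K]_(m, sigma))
    (J : 'M[K]_sigma) : 'M[K]_(k, sigma) :=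
  \matrix_(i, c) (\sum_(j < m) (row j E *m peval (A i j) J)) 0 c.

Definition interpolant (m sigma : nat) (E : 'M[K]_(m, sigma)) (J : 'M[K]_sigma)
    (p : 'rV[{poly K}]_m) : Prop := pact p E J = 0.

Definition is_interp_basis (m sigma : nat) (E : 'M[K]_(m, sigma)) (J : 'M[K]_sigma)
    (P : 'M[{poly K}]_m) : Prop :=
  [/\ forall i, interpolant E J (row i P),
      forall p, interpolant E J p -> exists u : 'rV[{poly K}]_m, p = u *m P
    & forall u : 'rV[{poly K}]_m, u *m P = 0 -> u = 0].

Definition sdeg_entry (m : nat) (s : 'I_m -> int) (p : 'rV[{poly K}]_m) (j : 'I_m) : int :=
  ((size (p 0 j)).-1)%:Z + s j.

Definition rdeg (m : nat) (s : 'I_m -> int) (p : 'rV[{poly K}]_m) : int :=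
  match [pick j | p 0 j != 0] with
  | Some j0 => \big[Num.max/ sdeg_entry s p j0]_(j | p 0 j != 0) sdeg_entry s p j
  | None => 0
  end.

Definition coefz (p : {poly K}) (k : int) : K :=
  match k with Posz n => p`_n | Negz _ => 0 end.

Definition lm (k m : nat) (s : 'I_m -> int) (P : 'M[{poly K}]_(k, m)) : 'M[K]_(k, m) :=
  \matrix_(i, j) coefz (P i j) (rdeg s (row i P) - s j).

Definition reduced (k m : nat) (s : 'I_m -> int) (P : 'M[{poly K}]_(k, m)) : bool :=
  row_free (lm s P).

Definition minimal_interp_basis (m sigma : nat) (s : 'I_m -> int)
    (E : 'M[K]_(m, sigma)) (J : 'M[K]_sigma) (P : 'M[{poly K}]_m) : Prop :=
  is_interp_basis E J P /\ reduced s P.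

Definition is_pivot (m : nat) (s : 'I_m -> int) (p : 'rV[{poly K}]_m) (j : 'I_m) : bool :=
  [&& p 0 j != 0, sdeg_entry s p j == rdeg s p &
      [forall k : 'I_m, (j < k)%N ==> ((p 0 k == 0) || (sdeg_entry s p k < rdeg s p))]].

Definition popov (m : nat) (s : 'I_m -> int) (P : 'M[{poly K}]_m) : Prop :=
  [/\ \det P != 0,
      forall i, is_pivot s (row i P) i,
      forall i, P i i \is monic
    & forall i j, i != j -> (size (P i j) < size (P j j))%N].

End Interp.

Section Construction.
Variables (m sigma : nat) (dlt : 'I_m -> nat).

(* delta = ceil(sigma / m) *)
Definition cdelta : nat := ((sigma + m).-1 %/ m)%N.
(* delta_i = (alpha_i - 1) delta + beta_i, alpha_i >= 1, 0 <= beta_i < delta *)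
Definition alpha (i : 'I_m) : nat := (dlt i %/ cdelta).+1.
Definition beta (i : 'I_m) : nat := (dlt i %% cdelta)%N.
Definition mbar : nat := (\sum_(i < m) alpha i)%N.
Definition aoff (i : 'I_m) : nat := (\sum_(j < m | (j < i)%N) alpha j)%N.
Definition inblock (i : 'I_m) (r : nat) : bool := (aoff i <= r < aoff i + alpha i)%N.

Definition dbar (r : 'I_mbar) : nat :=
  (\sum_(i < m | inblock i r) (if (r - aoff i).+1 < alpha i then cdelta else beta i))%N.

Definition Ecal (K : fieldType) : 'M[{poly K}]_(mbar, m) :=
  \matrix_(r, i) (if inblock i r then 'X^((r - aoff i) * cdelta) else 0).

Lemma last_row_lt (i : 'I_m) : ((aoff i + alpha i).-1 < mbar)%N.
Proof.
have Hle : (aoff i + alpha i <= mbar)%N.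
  rewrite /mbar (bigID (fun j : 'I_m => (j < i)%N)) /= leq_add2l.
  by rewrite (bigD1 i) ?ltnn //= leq_addr.
by rewrite prednK ?(leq_trans _ Hle) // addn_gt0 orbT.
Qed.

(* the row index alpha_1 + ... + alpha_i (1-based), i.e. 0-based last row of block i *)
Definition lastrow (i : 'I_m) : 'I_mbar := Ordinal (last_row_lt i).

End Construction.

(* Main.v *)
Require Import Defs.
From HB Require Import structures.
From mathcomp Require Import all_boot all_order all_algebra.
From mathcomp Require Import zify.
Set Implicit Arguments. Unset Strict Implicit. Unset Printing Implicit Defensive.
Import Order.TTheory GRing.Theory Num.Theory.
Local Open Scope ring_scope.

Section Pact.
Variable K : fieldType.

Lemma peval_horner n (p : {poly K}) (J : 'M[K]_n.+1) : peval p J = horner_mx J p.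
Proof.
rewrite /horner_mx /horner_morph horner_coef size_map_inj_poly; last 2 first.
- by move=> a b /matrixP/(_ 0 0); rewrite !mxE !eqxx !mulr1n.
- by apply/matrixP => i j; rewrite !mxE mul0rn.
by apply: eq_bigr => i _; rewrite coef_map /= -mulmxE mul_scalar_mx.
Qed.

Lemma row_pact k m sigma (A : 'M[{poly K}]_(k, m)) E (J : 'M[K]_sigma) i :
  row i (pact A E J) = \sum_(j < m) (row j E *m peval (A i j) J).
Proof. by apply/rowP => c; rewrite !mxE. Qed.

Lemma pact_mul k l m sigma (A : 'M[{poly K}]_(k, l)) (B : 'M[{poly K}]_(l, m)) E (J : 'M[K]_sigma) :
  pact (A *m B) E J = pact A (pact B E J) J.
Proof.
case: sigma E J => [|n] E J; first by rewrite !thinmx0.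
apply/row_matrixP => i; rewrite !row_pact.
under eq_bigr do rewrite mxE peval_horner rmorph_sum mulmx_sumr.
rewrite exchange_big /=; apply: eq_bigr => j _.
rewrite row_pact mulmx_suml; apply: eq_bigr => t _.
by rewrite !peval_horner rmorphM /= comm_horner_mx2 mulmxA.
Qed.

Lemma pact_add k m sigma (A B : 'M[{poly K}]_(k, m)) E (J : 'M[K]_sigma) :
  pact (A + B) E J = pact A E J + pact B E J.
Proof.
case: sigma E J => [|n] E J; first by rewrite !thinmx0.
apply/row_matrixP => i; rewrite linearD /= !row_pact -big_split /=.
by apply: eq_bigr => j _; rewrite mxE !peval_horner rmorphD mulmxDr.
Qed.

Lemma pact0 k m sigma E (J : 'M[K]_sigma) : pact (0 : 'M[{poly K}]_(k, m)) E J = 0.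
Proof.
case: sigma E J => [|n] E J; first by rewrite !thinmx0.
apply/row_matrixP => i; rewrite row_pact row0 big1 // => j _.
by rewrite mxE peval_horner rmorph0 mulmx0.
Qed.

Lemma pact_row k m sigma (A : 'M[{poly K}]_(k, m)) E (J : 'M[K]_sigma) i :
  pact (row i A) E J = row i (pact A E J).
Proof.
transitivity (row 0 (pact (row i A) E J)); first by apply/rowP => c; rewrite [RHS]mxE.
by rewrite !row_pact; apply: eq_bigr => j _; rewrite mxE.
Qed.

Lemma pact_eq0 k m sigma (A : 'M[{poly K}]_(k, m)) E (J : 'M[K]_sigma) :
  (forall i, pact (row i A) E J = 0) -> pact A E J = 0.
Proof. by move=> H; apply/row_matrixP => i; rewrite -pact_row H row0. Qed.

Lemma pact_E0 k m sigma (A : 'M[{poly K}]_(k, m)) (J : 'M[K]_sigma) :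
  pact A 0 J = 0.
Proof.
apply/row_matrixP => i; rewrite row_pact row0 big1 // => j _.
by rewrite row0 mul0mx.
Qed.

Lemma pact_sub k m sigma (A B : 'M[{poly K}]_(k, m)) E (J : 'M[K]_sigma) :
  pact (A - B) E J = pact A E J - pact B E J.
Proof.
rewrite pact_add; congr (_ + _); apply/eqP; rewrite -addr_eq0 -pact_add.
by rewrite addrC subrr pact0.
Qed.

End Pact.

Section PolyLemmas.
Variable K : fieldType.

Lemma coef_mul_top (a b : {poly K}) (A B : nat) :
  (size a <= A.+1)%N -> (size b <= B.+1)%N -> (a * b)`_(A + B) = a`_A * b`_B.
Proof.
move=> ha hb; rewrite coefM.
have hA : (A < (A + B).+1)%N by rewrite ltnS leq_addr.
rewrite (bigD1 (Ordinal hA)) //= addKn big1 ?addr0 // => i /eqP Hi.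
have Hi' : (i != A :> nat) by apply/eqP => E; apply: Hi; apply: val_inj.
case: (ltngtP i A) => [lt|gt|eq]; last by move: Hi' eq; lia.
- by rewrite (leq_sizeP _ _ hb) ?mulr0 //; move: (ltn_ord i); lia.
- by rewrite (leq_sizeP _ _ ha) ?mul0r.
Qed.

Definition degle (p : {poly K}) (t : int) := forall x : nat, t < x%:Z -> p`_x = 0.

Lemma degle0 (p : {poly K}) (t : int) : t < 0 -> degle p t -> p = 0.
Proof.
move=> ht hp; apply/polyP => x; rewrite coef0 hp //.
by apply: lt_le_trans ht _.
Qed.

Lemma coefz0 t : coefz (0 : {poly K}) t = 0.
Proof. by case: t => [n|n] //=; rewrite coef0. Qed.

Lemma coefz_mul (a b : {poly K}) (A B : int) :
  degle a A -> degle b B -> coefz (a * b) (A + B) = coefz a A * coefz b B.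
Proof.
move=> ha hb.
case: (ltP A 0) => hA0; first by rewrite (degle0 hA0 ha) mul0r !coefz0 mul0r.
case: (ltP B 0) => hB0; first by rewrite (degle0 hB0 hb) mulr0 !coefz0 mulr0.
case: A hA0 ha => [A|//] _ ha; case: B hB0 hb => [B|//] _ hb /=.
apply: coef_mul_top; apply/leq_sizeP => j hj.
- by apply: ha; rewrite ltz_nat.
- by apply: hb; rewrite ltz_nat.
Qed.

Lemma coefz_sum (I : finType) (P : pred I) (F : I -> {poly K}) t :
  coefz (\sum_(i | P i) F i) t = \sum_(i | P i) coefz (F i) t.
Proof. by case: t => [n|n] /=; [rewrite coef_sum | rewrite big1]. Qed.

Lemma degle_size (p : {poly K}) (t : int) : p != 0 -> (size p).-1%:Z <= t -> degle p t.
Proof.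
move=> p0 hp x hx; apply: nth_default.
have : ((size p).-1%:Z < x%:Z) by apply: le_lt_trans hp hx.
have hs : (0 < size p)%N by rewrite size_poly_gt0.
by rewrite ltz_nat; case: (size p) hs.
Qed.

End PolyLemmas.

Section Rdeg.
Variable K : fieldType.

Lemma rdeg_ge m (s : 'I_m -> int) (p : 'rV[{poly K}]_m) j :
  p 0 j != 0 -> sdeg_entry s p j <= rdeg s p.
Proof.
move=> pj; rewrite /rdeg; case: pickP => [j0 Hj0|H]; last by rewrite H in pj.
by rewrite (bigD1 j) //= le_max lexx.
Qed.

Lemma rdeg_attained m (s : 'I_m -> int) (p : 'rV[{poly K}]_m) :
  p != 0 -> exists2 j, p 0 j != 0 & sdeg_entry s p j = rdeg s p.
Proof.
move=> p0; rewrite /rdeg; case: pickP => [j0 Hj0|H]; last first.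
  by case/eqP: p0; apply/rowP => j; move/negbT: (H j); rewrite negbK mxE => /eqP.
apply: (big_ind (fun v => exists2 j, p 0 j != 0 & sdeg_entry s p j = v)).
- by exists j0.
- by move=> x y [j1 h1 e1] [j2 h2 e2]; rewrite maxEle; case: ifP => _; [exists j2|exists j1].
- by move=> j hj; exists j.
Qed.

Lemma row_nonzero n m (R : 'M[{poly K}]_(n, m)) :
  (forall u : 'rV_n, u *m R = 0 -> u = 0) -> forall k, row k R != 0.
Proof.
move=> H k; apply/eqP => Hk.
have := H (delta_mx 0 k); rewrite -rowE => /(_ Hk) /matrixP /(_ 0 k).
by rewrite !mxE !eqxx /= => /eqP; rewrite oner_eq0.
Qed.

Lemma pdp n (d : 'I_n -> int) (R : 'M[{poly K}]_n) (u : 'rV_n) :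
  row_free (lm d R) -> (forall k, row k R != 0) ->
  (forall c (x : nat), 0 < x%:Z + d c -> ((u *m R) 0 c)`_x = 0) ->
  forall k, u 0 k != 0 -> (size (u 0 k)).-1%:Z + rdeg d (row k R) <= 0.
Proof.
move=> Lfree Rnz Hg k uk; rewrite leNgt; apply/negP => Hpos.
pose r := fun k => rdeg d (row k R).
pose t := rdeg r u.
have u0 : u != 0 by apply/eqP => u0; rewrite u0 mxE eqxx in uk.
have tge : forall k, u 0 k != 0 -> (size (u 0 k)).-1%:Z + r k <= t.
  by move=> k' hk'; have := rdeg_ge r hk'.
have tpos : 0 < t by apply: lt_le_trans Hpos (tge _ uk).
pose c := \row_k coefz (u 0 k) (t - r k).
have c0 : c != 0.
  have [k1 hk1 ek1] := rdeg_attained r u0.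
  apply/eqP => /rowP /(_ k1); rewrite !mxE.
  have -> : t - r k1 = (size (u 0 k1)).-1%:Z.
    by rewrite /t -ek1 /sdeg_entry addrK.
  move=> /= /eqP; rewrite -lead_coefE lead_coef_eq0; exact/negP.
have cL : c *m lm d R != 0 by rewrite mulmx_free_eq0.
have [j hj] : exists j, (c *m lm d R) 0 j != 0.
  case: (pickP (fun j => (c *m lm d R) 0 j != 0)) => [j hj|H0]; first by exists j.
  by case/eqP: cL; apply/rowP => j; move/negbT: (H0 j) => /= /negbNE /eqP ->; rewrite mxE.
have Hcoef : (c *m lm d R) 0 j = coefz ((u *m R) 0 j) (t - d j).
  rewrite !mxE coefz_sum; apply: eq_bigr => k' _; rewrite !mxE.
  have -> : t - d j = (t - r k') + (r k' - d j) by rewrite addrA subrK.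
  rewrite coefz_mul //.
  - have [->|hu] := eqVneq (u 0 k') 0; first by move=> x _; rewrite coef0.
    apply: degle_size => //; have := tge _ hu; rewrite -lerBrDr => //.
  - have [->|hR] := eqVneq (R k' j) 0; first by move=> x _; rewrite coef0.
    apply: degle_size => //; have hR' : row k' R 0 j != 0 by rewrite mxE.
    have := rdeg_ge d hR'; rewrite /sdeg_entry mxE -lerBrDr => //.
move: hj; rewrite Hcoef; case E: (t - d j) => [x|x] /=; last by rewrite eqxx.
rewrite Hg ?eqxx // -(E : _ = Posz x) subrK.
exact: tpos.
Qed.


Lemma coef_id n (d : 'I_n -> int) (R : 'M[{poly K}]_n) (u : 'rV_n) (t : int) :
  (forall k, degle (u 0 k) (t - rdeg d (row k R))) ->
  forall c, coefz ((u *m R) 0 c) (t - d c) =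
    \sum_k coefz (u 0 k) (t - rdeg d (row k R)) * lm d R k c.
Proof.
move=> hu c; rewrite !mxE coefz_sum; apply: eq_bigr => k' _; rewrite !mxE.
have -> : t - d c = (t - rdeg d (row k' R)) + (rdeg d (row k' R) - d c) by rewrite addrA subrK.
rewrite coefz_mul //.
have [->|hR] := eqVneq (R k' c) 0; first by move=> x _; rewrite coef0.
apply: degle_size => //; have hR' : row k' R 0 c != 0 by rewrite mxE.
have := rdeg_ge d hR'; rewrite /sdeg_entry mxE -lerBrDr => //.
Qed.

End Rdeg.

Section Blocks.
Variables (m sigma : nat) (dlt : 'I_m -> nat).
Local Notation D := (cdelta m sigma).
Local Notation mb := (mbar sigma dlt).
Local Notation al := (alpha sigma dlt).

Definition blk (r : 'I_mb) : 'I_m := @tagnat.sig1 m al r.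
Definition pos (r : 'I_mb) : 'I_(al (blk r)) := @tagnat.sig2 m al r.
Definition rk (i : 'I_m) (k : 'I_(al i)) : 'I_mb := @tagnat.Rank m al i k.
Arguments rk : clear implicits.

Lemma rect (r : 'I_mb) : (r : nat) = (aoff sigma dlt (blk r) + pos r)%N.
Proof. exact: tagnat.rect. Qed.

Lemma rkE i k : (rk i k : nat) = (aoff sigma dlt i + k)%N.
Proof. exact: tagnat.RankEsum. Qed.

Lemma blk_rk i k : blk (rk i k) = i.
Proof. exact: tagnat.Rank1K. Qed.

Lemma pos_rk i k : (pos (rk i k) : nat) = k.
Proof. by rewrite /pos /rk tagnat.Rank2K. Qed.

Lemma rk_pos r : rk (blk r) (pos r) = r.
Proof. exact: tagnat.sig2K. Qed.

Lemma eq_rk i i' k k' : (rk i k == rk i' k') = (i == i') && (k == k' :> nat).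
Proof. by rewrite -val_eqE /rk tagnat.eq_Rank. Qed.

Lemma rk_val_inj i k (r : 'I_mb) : (r : nat) = (aoff sigma dlt i + k)%N -> forall (hk : (k < al i)%N), r = rk i (Ordinal hk).
Proof. by move=> hr hk; apply: ord_inj; rewrite rkE hr. Qed.

Lemma inblockE i (r : 'I_mb) : inblock sigma dlt i r = (blk r == i).
Proof.
rewrite /inblock; apply/idP/eqP => [/andP [h1 h2]|<-].
  have hk : (r - aoff sigma dlt i < al i)%N by lia.
  have -> : r = rk i (Ordinal hk) by apply: rk_val_inj; rewrite subnKC.
  by rewrite blk_rk.
by rewrite rect leq_addr /= ltn_add2l.
Qed.

Definition lastpos (i : 'I_m) : 'I_(al i) := Ordinal (ltnSn (dlt i %/ D)).

Lemma lastrowE i : lastrow sigma dlt i = rk i (lastpos i).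
Proof. by apply: ord_inj; rewrite rkE /= /alpha addnS. Qed.

Lemma dbarE r : dbar r = if ((pos r).+1 < al (blk r))%N then D else beta sigma dlt (blk r).
Proof.
rewrite /dbar (eq_bigl (pred1 (blk r))); last by move=> i; rewrite inblockE eq_sym.
by rewrite big_pred1_eq rect addKn.
Qed.

Lemma EcalE (K : fieldType) r i :
  Ecal sigma dlt K r i = if blk r == i then 'X^(pos r * D) else 0.
Proof. by rewrite mxE inblockE; case: eqP => // <-; rewrite rect addKn. Qed.

Lemma sum_blocks (V : nmodType) (F : 'I_mb -> V) :
  \sum_(r : 'I_mb) F r = \sum_(i < m) \sum_(k < al i) F (rk i k).
Proof.
rewrite sig_big_dep /=.
rewrite (reindex (@tagnat.rank m al)) /=; last exact: tagnat.rank_bij_on.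
by apply: eq_bigr => -[i k] _; rewrite tagnat.rankE.
Qed.

Lemma mulEcal (K : fieldType) (w : 'rV[{poly K}]_mb) j :
  (w *m Ecal sigma dlt K) 0 j = \sum_(k < al j) w 0 (rk j k) * 'X^(k * D).
Proof.
rewrite mxE sum_blocks (bigD1 j) //= [X in _ + X]big1 ?addr0.
  by apply: eq_bigr => k _; rewrite EcalE pos_rk blk_rk eqxx.
by move=> i /negbTE hi; rewrite big1 // => k _; rewrite EcalE pos_rk blk_rk hi mulr0.
Qed.

Lemma dlt_split i : dlt i = ((al i).-1 * D + beta sigma dlt i)%N.
Proof. exact: divn_eq. Qed.

Lemma beta_lt i : (0 < D)%N -> (beta sigma dlt i < D)%N.
Proof. exact: ltn_pmod. Qed.

End Blocks.
Arguments rk {m sigma dlt} i k.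

Section Main.
Variables (K : fieldType) (m sigma : nat) (E : 'M[K]_(m, sigma)) (J : 'M[K]_sigma).
Variables (s : 'I_m -> int) (P : 'M[{poly K}]_m).
Hypothesis HP : is_interp_basis E J P.
Hypothesis HPpop : popov s P.
Let dlt := fun i : 'I_m => (size (P i i)).-1.
Local Notation D := (cdelta m sigma).
Local Notation mb := (mbar sigma dlt).
Local Notation al := (alpha sigma dlt).
Local Notation Ec := (Ecal sigma dlt K).
Local Notation rk := (@rk m sigma dlt).
Hypothesis hD : (0 < D)%N.

Lemma Pdiag_size i : size (P i i) = (dlt i).+1.
Proof.
case: HPpop => _ _ Hmon _; rewrite /dlt prednK // size_poly_gt0.
exact: monic_neq0.
Qed.

Lemma P_size i j : (size (P i j) <= (dlt j).+1)%N.
Proof.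
have [->|hij] := eqVneq i j; first by rewrite Pdiag_size.
by case: HPpop => _ _ _ /(_ _ _ hij); rewrite Pdiag_size => /ltnW.
Qed.

Lemma P_top i j : (P i j)`_(dlt j) = (i == j)%:R.
Proof.
have [<-|hij] := eqVneq i j.
  by case: HPpop => _ _ /(_ i) /monicP; rewrite lead_coefE.
case: HPpop => _ _ _ /(_ _ _ hij); rewrite Pdiag_size ltnS => h.
exact: (leq_sizeP _ _ h).
Qed.

Lemma small_interp (w : 'rV[{poly K}]_m) :
  interpolant E J w -> (forall j, (size (w 0%R j) <= dlt j)%N) -> w = 0.
Proof.
case: HP => _ Hgen _ /Hgen [u ->] Hsz.
have [->|u0] := eqVneq u 0; first by rewrite mul0mx.
have [j0 hj0 ej0] := rdeg_attained (fun _ => 0) u0.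
pose T := (size (u 0 j0)).-1.
have hu : forall i, (size (u 0%R i) <= T.+1)%N.
  move=> i; have [->|hi] := eqVneq (u 0 i) 0; first by rewrite size_poly0.
  have := rdeg_ge (fun _ => 0) hi; rewrite -ej0 /sdeg_entry !addr0 lez_nat.
  have := size_poly_gt0 (u 0 i); rewrite hi; case: (size (u 0 i)) => // n _.
have := Hsz j0; move/leq_sizeP => /(_ (T + dlt j0)%N (leq_addl _ _)).
rewrite mxE coef_sum (bigD1 j0) //= big1 ?addr0; last first.
  by move=> i hi; rewrite coef_mul_top ?hu ?P_size // P_top (negbTE hi) mulr0.
rewrite coef_mul_top ?hu ?P_size // P_top eqxx mulr1 => /eqP.
by rewrite /T -lead_coefE lead_coef_eq0 (negbTE hj0).
Qed.

Definition sh (n : nat) (p : {poly K}) := \poly_(a < size p) p`_(n + a).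
Definition lo (p : {poly K}) := \poly_(a < D) p`_a.
Definition chunk (j : 'I_m) (p : {poly K}) (k : nat) :=
  if (k.+1 < al j)%N then lo (sh (k * D) p) else sh ((al j).-1 * D) p.

Lemma coef_sh n p b : (sh n p)`_b = p`_(n + b).
Proof.
rewrite coef_poly; case: ltnP => // h.
by rewrite nth_default //; apply: leq_trans h (leq_addl _ _).
Qed.

Lemma split_step n p : sh (n * D) p = lo (sh (n * D) p) + sh (n.+1 * D) p * 'X^D.
Proof.
apply/polyP => b; rewrite coefD coefMXn coef_sh /lo coef_poly coef_sh; case: ltnP => hb.
  by rewrite addr0.
by rewrite add0r coef_sh mulSn -addnA addnCA subnKC.
Qed.

Lemma expand_n n p :
  \sum_(k < n) lo (sh (k * D) p) * 'X^(k * D) + sh (n * D) p * 'X^(n * D) = p.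
Proof.
elim: n => [|n IH].
  by rewrite big_ord0 add0r mul0n expr0 mulr1; apply/polyP => b; rewrite coef_sh.
rewrite big_ord_recr /= -addrA -{}[RHS]IH; congr (_ + _).
by rewrite {2}split_step mulrDl -mulrA -exprD mulSn addnC.
Qed.

Lemma chunk_sum j p : \sum_(k < al j) chunk j p k * 'X^(k * D) = p.
Proof.
rewrite /alpha big_ord_recr /= -[RHS](expand_n (dlt j %/ D)); congr (_ + _).
  by apply: eq_bigr => k _; rewrite /chunk /alpha ltnS ltn_ord.
by rewrite /chunk /alpha ltnn.
Qed.

Lemma chunk_size j (p : {poly K}) (k : nat) : (size p <= (dlt j).+1)%N ->
  (size (chunk j p k) <= (if (k.+1 < al j)%N then D else beta sigma dlt j).+1)%N.
Proof.
move=> hp; rewrite /chunk; case: ifP => _.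
  by apply: leq_trans (size_poly _ _) (leqnSn _).
apply/leq_sizeP => b hb; rewrite coef_sh; apply: (leq_sizeP _ _ hp).
by rewrite [X in (X < _)%N](dlt_split sigma dlt j) ltn_add2l.
Qed.

Lemma chunk_topD j p (k : nat) : (k.+1 < al j)%N -> (chunk j p k)`_D = 0.
Proof. by rewrite /chunk => ->; rewrite coef_poly ltnn. Qed.

Lemma chunk_top_last j p : (chunk j p (al j).-1)`_(beta sigma dlt j) = p`_(dlt j).
Proof.
rewrite /chunk prednK // ltnn coef_sh.
by rewrite [in RHS](dlt_split sigma dlt j).
Qed.

Definition nonlast (r : 'I_mb) := ((pos r).+1 < al (blk r))%N.

Definition G : 'M[{poly K}]_mb := \matrix_(r, c)
  if nonlast r then (if c == r then 'X^D else if (c : nat) == r.+1 then -1 else 0)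
  else chunk (blk c) (P (blk r) (blk c)) (pos c).

Lemma dbar_rk i (k : 'I_(al i)) :
  dbar (rk i k) = if (k.+1 < al i)%N then D else beta sigma dlt i.
Proof. by rewrite dbarE pos_rk blk_rk. Qed.

Lemma dbar_le (r : 'I_mb) : (dbar r <= D)%N.
Proof. by rewrite dbarE; case: ifP => // _; apply: ltnW; apply: beta_lt. Qed.

Lemma eq_rk_r j (k : 'I_(al j)) (r : 'I_mb) :
  (rk j k == r) = (j == blk r) && (k == pos r :> nat).
Proof. by have := eq_rk k (pos r); rewrite rk_pos. Qed.

Lemma eq_rk_rS j (k : 'I_(al j)) (r : 'I_mb) : nonlast r ->
  ((rk j k : nat) == r.+1) = (j == blk r) && (k == (pos r).+1 :> nat).
Proof.
move=> hr; have e : r.+1 = rk (blk r) (Ordinal hr) :> nat by rewrite rkE rect addnS.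
by rewrite e -(eq_rk k (Ordinal hr)).
Qed.

Lemma nonlast_rk i (k : 'I_(al i)) : nonlast (rk i k) = (k.+1 < al i)%N.
Proof. by rewrite /nonlast pos_rk blk_rk. Qed.

Lemma GEc_nonlast r : nonlast r -> row r G *m Ec = 0.
Proof.
move=> hr; apply/rowP => j; rewrite mulEcal mxE.
under eq_bigr do rewrite !mxE hr eq_rk_r eq_rk_rS //.
have [->|hj] := eqVneq j (blk r); last by rewrite big1 // => k _; rewrite mul0r.
rewrite (bigD1 (pos r)) //= eqxx /= (bigD1 (Ordinal hr)) /=; last first.
  by rewrite -val_eqE /= neq_ltn ltnSn orbT.
rewrite (gtn_eqF (ltnSn _)) eqxx [X in _ + (_ + X)]big1 ?addr0; last first.
  move=> k /andP [h1 h2]; rewrite ifF; last exact: negbTE h1.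
  by rewrite ifF ?mul0r //; exact: negbTE h2.
by rewrite -exprD mulSn mulN1r addrN.
Qed.

Lemma GEc_last r : ~~ nonlast r -> row r G *m Ec = row (blk r) P.
Proof.
move=> hr; apply/rowP => j; rewrite mulEcal [RHS]mxE -[RHS](chunk_sum j).
apply: eq_bigr => k _; rewrite !mxE (negbTE hr).
by rewrite pos_rk blk_rk.
Qed.

Lemma dbarN (r : 'I_mb) : dbar r = if nonlast r then D else beta sigma dlt (blk r).
Proof. exact: dbarE. Qed.

Lemma G_int r : pact (row r G *m Ec) E J = 0.
Proof.
case: (boolP (nonlast r)) => hr; first by rewrite GEc_nonlast // pact0.
by rewrite GEc_last //; case: HP => /(_ (blk r)).
Qed.

Lemma G_deg r c : (size (G r c) <= (dbar c).+1)%N.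
Proof.
rewrite mxE; case: ifP => hr.
  case: eqP => [->|_]; first by rewrite size_polyXn dbarN hr.
  case: eqP => _; last by rewrite size_poly0.
  by rewrite size_polyN size_poly1.
by rewrite dbarN; apply: chunk_size; apply: P_size.
Qed.

Definition lm0 : 'M[K]_mb := \matrix_(r, c) (G r c)`_(dbar c).

Lemma last_pos (r : 'I_mb) : ~~ nonlast r -> (pos r : nat) = (al (blk r)).-1.
Proof. by rewrite /nonlast -leqNgt => h; have := ltn_ord (pos r); lia. Qed.

Lemma lm0_diag (r : 'I_mb) : lm0 r r = 1.
Proof.
rewrite !mxE; case: ifP => hr.
  by rewrite eqxx dbarN hr coefXn eqxx.
rewrite dbarN hr last_pos ?hr // chunk_top_last.
by rewrite P_top eqxx.
Qed.

Lemma lm0_lt (r c : 'I_mb) : (c < r)%N -> lm0 r c = 0.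
Proof.
move=> hcr; rewrite !mxE; case: ifP => hr.
  rewrite ifF; last by apply/negbTE; rewrite neq_ltn hcr.
  by rewrite ifF ?coef0 //; apply/negbTE; rewrite neq_ltn ltnS ltnW.
case: (boolP (nonlast c)) => hc.
  by rewrite dbarN hc chunk_topD.
rewrite dbarN (negbTE hc) last_pos // chunk_top_last P_top.
case: eqP => // eb; exfalso.
have : r = c.
  rewrite -(rk_pos r) -(rk_pos c); apply/eqP; rewrite eq_rk; apply/andP; split.
    exact/eqP.
  by rewrite !last_pos ?hr // eb.
by move=> erc; rewrite erc ltnn in hcr.
Qed.

Lemma lm0_unit : lm0 \in unitmx.
Proof.
rewrite unitmxE -det_tr det_trig.
  by rewrite big1 ?unitr1 // => i _; rewrite mxE lm0_diag.
by apply/is_trig_mxP => i j hij; rewrite mxE lm0_lt.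
Qed.

Lemma alE j : al j = (dlt j %/ D).+1.
Proof. by []. Qed.

Lemma dltE j : dlt j = (dlt j %/ D * D + beta sigma dlt j)%N.
Proof. exact: divn_eq. Qed.

Lemma expand_top (w : 'rV[{poly K}]_mb) j :
  (forall k : 'I_(al j), (k.+1 < al j)%N -> forall x, (D <= x)%N -> (w 0 (rk j k))`_x = 0) ->
  forall n, (dlt j <= n)%N ->
  ((w *m Ec) 0 j)`_n = (w 0 (lastrow sigma dlt j))`_(n - dlt j %/ D * D).
Proof.
move=> Hw n hn; rewrite mulEcal coef_sum /alpha big_ord_recr /= big1 ?add0r.
  rewrite coefMXn ifF; last by apply/negbTE; rewrite -leqNgt; move: hn; rewrite {1}dltE; lia.
  by rewrite lastrowE.
move=> k _; rewrite coefMXn; case: ifP => // h.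
have hk : ((widen_ord (leqnSn _) k).+1 < al j)%N by rewrite alE ltnS /=.
rewrite (Hw _ hk) ?mul0r //=.
have hk' := ltn_ord k.
have : (k.+1 * D <= dlt j %/ D * D)%N by rewrite leq_mul2r hk' orbT.
move: hn; rewrite {1}dltE mulSn; lia.
Qed.

Lemma expand_small (w : 'rV[{poly K}]_mb) j :
  (forall k : 'I_(al j), forall x, (dbar (rk j k) <= x)%N -> (w 0 (rk j k))`_x = 0) ->
  forall n, (dlt j <= n)%N -> ((w *m Ec) 0 j)`_n = 0.
Proof.
move=> Hw n hn; rewrite expand_top //.
  rewrite lastrowE Hw // dbar_rk /= ltnn.
  by move: hn; rewrite {1}dltE; lia.
by move=> k hk x hx; rewrite Hw // dbar_rk hk.
Qed.

Lemma extract (w : 'rV[{poly K}]_mb) :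
  (forall c x, (dbar c <= x)%N -> (w 0 c)`_x = 0) -> w *m Ec = 0 -> w = 0.
Proof.
move=> Hw Hz.
suff H : forall j (k : 'I_(al j)) a, (a < dbar (rk j k))%N -> (w 0 (rk j k))`_a = 0.
  apply/rowP => c; rewrite [RHS]mxE; apply/polyP => a; rewrite coef0.
  case: (ltnP a (dbar c)) => ha; last exact: Hw.
  by rewrite -(rk_pos c) H // rk_pos.
move=> j k a ha.
have hD' := dbar_le (rk j k).
have : ((w *m Ec) 0 j)`_(k * D + a) = 0 by rewrite Hz mxE coef0.
rewrite mulEcal coef_sum (bigD1 k) //= big1 ?addr0.
  by rewrite coefMXn ltnNge leq_addr /= addKn.
move=> k' hk'; rewrite coefMXn; case: ifP => // h.
have hne' : (k' : nat) <> k by move=> e; case/eqP: hk'; apply: ord_inj.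
have hlt : (k' < k)%N.
  case: (ltngtP k' k) => // hgt.
  have : (k.+1 * D <= k' * D)%N by rewrite leq_mul2r hgt orbT.
  move/negbT: h; rewrite -leqNgt mulSn; lia.
have hnl : (k'.+1 < al j)%N by apply: leq_trans (ltn_ord k); rewrite ltnS.
rewrite Hw ?mul0r // dbar_rk hnl.
have : (k'.+1 * D <= k * D)%N by rewrite leq_mul2r hlt orbT.
rewrite mulSn; lia.
Qed.

Local Notation d := (fun r : 'I_mb => - (dbar r)%:Z).

Section WithR.
Variable R : 'M[{poly K}]_mb.
Hypothesis HR : minimal_interp_basis d (pact Ec E J) J R.

Lemma R_ind : forall u : 'rV_mb, u *m R = 0 -> u = 0.
Proof. by case: HR => -[]. Qed.

Lemma R_nz k : row k R != 0.
Proof. exact: (row_nonzero R_ind). Qed.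

Lemma R_free : row_free (lm d R).
Proof. by case: HR. Qed.

Lemma R_int (u : 'rV_mb) : pact (u *m R *m Ec) E J = 0.
Proof.
have H0 : pact R (pact Ec E J) J = 0.
  by apply: pact_eq0 => i; case: HR => -[+ _ _] _; apply.
by rewrite !pact_mul H0 pact_E0.
Qed.

Lemma R_deg k c : R k c != 0 -> (size (R k c)).-1%:Z - (dbar c)%:Z <= rdeg d (row k R).
Proof.
move=> h; have h' : row k R 0 c != 0 by rewrite mxE.
by have := rdeg_ge d h'; rewrite /sdeg_entry mxE.
Qed.

Lemma rk_ge0 k : 0 <= rdeg d (row k R).
Proof.
rewrite leNgt; apply/negP => hneg.
have Hw : forall c x, (dbar c <= x)%N -> (row k R 0 c)`_x = 0.
  move=> c x hx; rewrite mxE.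
  have [->|h] := eqVneq (R k c) 0; first by rewrite coef0.
  apply: nth_default; have := R_deg h.
  have := size_poly_gt0 (R k c); rewrite h.
  case: (size (R k c)) => //= n _ hn; apply: (leq_trans _ hx).
  have : n%:Z - (dbar c)%:Z < 0 by apply: le_lt_trans hn hneg.
  by rewrite subr_lt0 ltz_nat.
have Hint : interpolant E J (row k R *m Ec).
  by rewrite /interpolant rowE R_int.
have Hz : row k R *m Ec = 0.
  apply: small_interp => // j; apply/leq_sizeP => n hn.
  apply: expand_small => // k' x hx; exact: Hw.
by have := R_nz k; rewrite (extract Hw Hz) eqxx.
Qed.

Lemma rk_le0 k : rdeg d (row k R) <= 0.
Proof.
have hG : forall l, exists v : 'rV_mb, row l G = v *m R.
  move=> l; case: HR => -[_ Rgen _] _; apply: Rgen.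
  by rewrite /interpolant -pact_mul G_int.
have [f hf] := fin_all_exists hG.
pose V := \matrix_(l, k) f l 0 k.
have rowV : forall l, row l V = f l by move=> l; apply/rowP => k'; rewrite !mxE.
pose rr := fun k => rdeg d (row k R).
have eG : forall l c, G l c = (row l V *m R) 0 c.
  by move=> l c; rewrite rowV -hf [RHS]mxE.
have Hdeg : forall l k, V l k != 0 -> (size (V l k)).-1%:Z + rr k <= 0.
  move=> l k' hv.
  have := @pdp _ _ d R (row l V) R_free R_nz _ k'; rewrite mxE; apply => // c x hx.
  rewrite -eG; apply: (leq_sizeP _ _ (G_deg l c)).
  by move: hx; rewrite -ltz_nat; lia.
pose C := \matrix_(l, k) coefz (V l k) (0 - rr k).
have HC : lm0 = C *m lm d R.
  apply/matrixP => l c.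
  transitivity (coefz ((row l V *m R) 0 c) (0 - d c)).
    by rewrite sub0r opprK /= -eG mxE.
  rewrite (@coef_id _ _ d R (row l V) 0).
    by rewrite [RHS]mxE; apply: eq_bigr => k' _; rewrite !mxE.
  move=> k'; rewrite mxE.
  have [->|hv] := eqVneq (V l k') 0; first by move=> x _; rewrite coef0.
  by apply: degle_size => //; have := Hdeg _ _ hv; rewrite /rr; lia.
have Cunit : C \in unitmx.
  by move: (lm0_unit); rewrite HC unitmx_mul => /andP[].
have [l hl] : exists l, C l k != 0.
  case: (pickP (fun l => C l k != 0)) => [l hl|H0]; first by exists l.
  have := mulVmx Cunit; move/matrixP/(_ k k); rewrite !mxE eqxx /= big1.
    by move/eqP; rewrite eq_sym oner_eq0.
  by move=> l _; move/negbT: (H0 l) => /negbNE /eqP ->; rewrite mulr0.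
move: hl; rewrite mxE; case E0: (0 - rr k) => [x|x] /=; last by rewrite eqxx.
move=> _; have : 0 <= 0 - rr k by rewrite E0.
by rewrite /rr; lia.
Qed.

Lemma rk0 k : rdeg d (row k R) = 0.
Proof. by apply/eqP; rewrite eq_le rk_le0 rk_ge0. Qed.

Lemma Lentry k c : lm d R k c = (R k c)`_(dbar c).
Proof. by rewrite mxE rk0 sub0r opprK. Qed.

Lemma Rbound k c x : (dbar c < x)%N -> (R k c)`_x = 0.
Proof.
move=> hx; have [->|h] := eqVneq (R k c) 0; first by rewrite coef0.
apply: nth_default; have := R_deg h; rewrite rk0.
have := size_poly_gt0 (R k c); rewrite h.
case: (size (R k c)) => //= n _; rewrite subr_le0 lez_nat => hn.
exact: leq_ltn_trans hn hx.
Qed.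

Local Notation R' := (map_mx polyC (invmx (lm d R)) *m R).

Lemma R'coef l c x : (R' l c)`_x = \sum_k invmx (lm d R) l k * (R k c)`_x.
Proof. by rewrite mxE coef_sum; apply: eq_bigr => k _; rewrite mxE coefCM. Qed.

Lemma e1 l c x : (dbar c < x)%N -> (R' l c)`_x = 0.
Proof. by move=> hx; rewrite R'coef big1 // => k _; rewrite Rbound ?mulr0. Qed.

Lemma e2 l c : (R' l c)`_(dbar c) = (l == c)%:R.
Proof.
have Lu : lm d R \in unitmx by rewrite -row_free_unit R_free.
rewrite R'coef; have := mulVmx Lu; move/matrixP/(_ l c); rewrite !mxE => <-.
by apply: eq_bigr => k _; rewrite Lentry.
Qed.

Lemma lastrow_eq i j : (lastrow sigma dlt i == lastrow sigma dlt j) = (i == j).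
Proof. by rewrite !lastrowE eq_rk; case: eqVneq => //= ->; rewrite eqxx. Qed.

Lemma dbar_last j : dbar (lastrow sigma dlt j) = beta sigma dlt j.
Proof. by rewrite lastrowE dbar_rk /= ltnn. Qed.

Lemma final_rows i : row (lastrow sigma dlt i) R' *m Ec = row i P.
Proof.
apply/eqP; rewrite -subr_eq0; apply/eqP; apply: small_interp.
  rewrite /interpolant pact_sub row_mul R_int.
  by case: HP => /(_ i) -> _ _; rewrite subrr.
move=> j; apply/leq_sizeP => n hn.
have -> : (row (lastrow sigma dlt i) R' *m Ec - row i P) 0 j = (row (lastrow sigma dlt i) R' *m Ec) 0 j - P i j by rewrite !mxE.
rewrite coefB.
rewrite expand_top //; last first.
  move=> k hk x hx; rewrite mxE.
  move: hx; rewrite leq_eqVlt => /orP [/eqP <-|hlt]; last by rewrite e1 // dbar_rk hk.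
  have := e2 (lastrow sigma dlt i) (rk j k); rewrite dbar_rk hk => ->.
  rewrite lastrowE eq_rk; case: eqVneq => //= eij; subst j.
  have hk' : (k.+1 < (dlt i %/ D).+1)%N by rewrite -alE.
  by rewrite (_ : (_ == _) = false) //; apply/negbTE; lia.
rewrite mxE; move: hn; rewrite leq_eqVlt => /orP [/eqP hn|hn].
  rewrite -hn {1}dltE addKn.
  have := e2 (lastrow sigma dlt i) (lastrow sigma dlt j).
  rewrite dbar_last => ->.
  by rewrite P_top lastrow_eq subrr.
rewrite e1; last by rewrite dbar_last; move: hn; rewrite {1}dltE; lia.
by rewrite (leq_sizeP _ _ (P_size i j)) // subrr.
Qed.

Lemma main_thm :
  P = \matrix_(i, j) ((map_mx polyC (invmx (lm d R)) *m R *m Ec) (lastrow sigma dlt i) j).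
Proof.
apply/matrixP => i j; rewrite [RHS]mxE.
transitivity ((row i P) 0 j); first by rewrite mxE.
by rewrite -final_rows -row_mul mxE.
Qed.

End WithR.

End Main.

Theorem lemma4p2 (K : fieldType) (m sigma : nat)
    (E : 'M[K]_(m, sigma)) (J : 'M[K]_sigma) (s : 'I_m -> int)
    (P : 'M[{poly K}]_m)
    (HP : is_interp_basis E J P) (HPpop : popov s P) :
  (* delta : the s-minimal degree, i.e. degrees of the diagonal of the s-Popov basis P *)
  let dlt := fun i : 'I_m => (size (P i i)).-1 in
  (0 < cdelta m sigma)%N ->
  let d := fun r : 'I_(mbar sigma dlt) => - (@dbar m sigma dlt r)%:Z in
  forall R : 'M[{poly K}]_(mbar sigma dlt),
    minimal_interp_basis d (pact (Ecal sigma dlt K) E J) J R ->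
    P = \matrix_(i, j)
          ((map_mx polyC (invmx (lm d R)) *m R *m Ecal sigma dlt K) (lastrow sigma dlt i) j).
Proof.
move=> dlt hD d R HR.
exact: (main_thm HP HPpop hD HR).
Qed.
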